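(* For every $j\in[n-1]$, the geometric crystal operator $\bar e_j^c$ on $\mathrm{GT}_n^{\le m}$ preserves shape: $\mathrm{sh}(\bar e_j^c(\mathbf{z}))=\mathrm{sh}(\mathbf{z})$ as rational functions of $\mathbf{z}$ and $c$.
   Context: $\mathrm{GT}_n^{\le m}$ is the torus of arrays $\mathbf{z}=(z_{i,j})$, $z_{i,j}\in\mathbb{C}^*$, $1\le i\le m$, $i\le j\le n$; $p=\min(m,n)$ and $\mathrm{sh}(\mathbf{z})=(z_{1,n},\dots,z_{p,n})$. $E_{a,b}$ is a matrix unit, $x_j(a)=I+aE_{j,j+1}$, and $\Delta_I(A)$ is the minor of an $n\times n$ matrix $A$ with rows $I$ and columns $[1,|I|]$ ($\Delta_\emptyset=1$). $W^i(y_i,\dots,y_n)=\sum_{k<i}E_{kk}+\sum_{k\ge i}y_kE_{kk}+\sum_{k=i}^{n-1}E_{k+1,k}$; $\Phi(\mathbf{z})=W^p(z_{p,p},\frac{z_{p,p+1}}{z_{p,p}},\dots,\frac{z_{p,n}}{z_{p,n-1}})\cdots W^1(z_{1,1},\frac{z_{1,2}}{z_{1,1}},\dots,\frac{z_{1,n}}{z_{1,n-1}})$; $\Psi(A)=(\Delta_{[i,j]}(A)/\Delta_{[i+1,j]}(A))_{1\le i\le m,\,i\le j\le n}$. With $A=\Phi(\mathbf{z})$: $\bar\varepsilon_j(\mathbf{z})=A_{j+1,j+1}/A_{j+1,j}$, $\bar\varphi_j(\mathbf{z})=A_{j,j}/A_{j+1,j}$, and $\bar e_j^c(\mathbf{z})=\Psi\big(x_j((c-1)\bar\varphi_j(\mathbf{z}))\,A\,x_j((c^{-1}-1)\bar\varepsilon_j(\mathbf{z}))\big)$.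 *)

(* Defs.v *)
(* All indices i, j, k of the paper are 1-based naturals;
   matrix entries are accessed through [ent], which is 0-based. *)
From mathcomp Require Import all_boot all_order all_algebra.
Set Implicit Arguments. Unset Strict Implicit. Unset Printing Implicit Defensive.
Import Order.TTheory GRing.Theory Num.Theory.
Local Open Scope ring_scope.

Section GT.
Variable C : fieldType.

Definition ent n (A : 'M[C]_n) (r s : nat) : C :=
  if @insub nat (fun x => (x < n)%N) 'I_n r is Some i then
    (if @insub nat (fun x => (x < n)%N) 'I_n s is Some k then A i k else 0)
  else 0.

Definition Emx n (a b : nat) : 'M[C]_n :=
  \matrix_(r, s) ((r.+1 == a) && (s.+1 == b))%:R.

Definition xmx n (j : nat) (a : C) : 'M[C]_n := 1%:M + a *: Emx n j j.+1.

(* W^i(y_i,...,y_n), with y given as a function of the 1-based index k *)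
Definition Wmx n (i : nat) (y : nat -> C) : 'M[C]_n :=
  \matrix_(r, s)
    (if r == s :> nat then (if (r.+1 < i)%N then 1 else y r.+1)
     else if (r == s.+1 :> nat) && (i <= s.+1)%N then 1 else 0).

Definition Wargs (z : nat -> nat -> C) (i : nat) (k : nat) : C :=
  if k == i then z i i else z i k / z i k.-1.

Fixpoint Phi_aux n (z : nat -> nat -> C) (k : nat) : 'M[C]_n :=
  match k with
  | 0 => 1%:M
  | k'.+1 => Wmx n k (Wargs z k) *m Phi_aux n z k'
  end.

Definition Phi m n (z : nat -> nat -> C) : 'M[C]_n := Phi_aux n z (minn m n).

(* Delta_{[a,b]}(A): rows a..b, columns 1..(b-a+1) (1-based); equals 1 if b < a *)
Definition minorI n (A : 'M[C]_n) (a b : nat) : C :=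
  let k := (b.+1 - a)%N in
  \det (\matrix_(r < k, s < k) ent A (a.-1 + r)%N s).

Definition Psi n (A : 'M[C]_n) : nat -> nat -> C :=
  fun i j => minorI A i j / minorI A i.+1 j.

Definition epsbar m n (j : nat) (z : nat -> nat -> C) : C :=
  ent (Phi m n z) j j / ent (Phi m n z) j j.-1.
Definition phibar m n (j : nat) (z : nat -> nat -> C) : C :=
  ent (Phi m n z) j.-1 j.-1 / ent (Phi m n z) j j.-1.

Definition ebar_mx m n (j : nat) (c : C) (z : nat -> nat -> C) : 'M[C]_n :=
  xmx n j ((c - 1) * phibar m n j z) *m Phi m n z
    *m xmx n j ((c^-1 - 1) * epsbar m n j z).

Definition ebar m n (j : nat) (c : C) (z : nat -> nat -> C) : nat -> nat -> C :=
  Psi (ebar_mx m n j c z).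

Definition sh m n (z : nat -> nat -> C) : seq C :=
  [seq z i n | i <- iota 1 (minn m n)].

End GT.

(* Main.v *)
Require Import Defs.
From mathcomp Require Import all_boot all_order all_algebra zify.
Import Order.TTheory GRing.Theory Num.Theory.
Local Open Scope ring_scope.

Section Aux.
Variable C : fieldType.
Variable n : nat.

Lemma entE (A : 'M[C]_n) (i j : 'I_n) : ent A i j = A i j.
Proof.
rewrite /ent; case: insubP => [i' _ Hi|]; last by rewrite ltn_ord.
case: insubP => [j' _ Hj|]; last by rewrite ltn_ord.
by congr (A _ _); apply: val_inj.
Qed.

Lemma ent_outr (A : 'M[C]_n) r s : (n <= r)%N -> ent A r s = 0.
Proof. by move=> H; rewrite /ent; case: insubP => // u; rewrite ltnNge H. Qed.

Lemma ent_outc (A : 'M[C]_n) r s : (n <= s)%N -> ent A r s = 0.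
Proof.
move=> H; rewrite /ent; case: insubP => // u _ _.
by case: insubP => // v; rewrite ltnNge H.
Qed.

Lemma entM (X Y : 'M[C]_n) r s :
  ent (X *m Y) r s = \sum_(t < n) ent X r t * ent Y t s.
Proof.
case: (ltnP r n) => Hr; last first.
  by rewrite ent_outr // big1 // => t _; rewrite ent_outr ?mul0r.
case: (ltnP s n) => Hs; last first.
  by rewrite ent_outc // big1 // => t _; rewrite (ent_outc Y) ?mulr0.
have -> : ent (X *m Y) r s = (X *m Y) (Ordinal Hr) (Ordinal Hs)
  := entE _ (Ordinal Hr) (Ordinal Hs).
rewrite !mxE; apply: eq_bigr => t _.
by rewrite (entE X (Ordinal Hr) t) (entE Y t (Ordinal Hs)).
Qed.

Definition M (A : 'M[C]_n) r c k :=
  \det (\matrix_(i < k, j < k) ent A (r + i) (c + j)).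

Lemma M_mul (X Y : 'M[C]_n) r c c' k : (c' + k <= n)%N ->
  (forall i j t, (i < k)%N -> (j < k)%N -> (t < n)%N -> (t < c')%N || (c' + k <= t)%N ->
     ent X (r + i) t * ent Y t (c + j) = 0) ->
  M (X *m Y) r c k = M X r c' k * M Y c' c k.
Proof.
move=> Hk H0; rewrite /M -det_mulmx; congr (\det _); apply/matrixP => i j.
rewrite !mxE entM.
rewrite -(big_mkord xpredT (fun t => ent X (r + i) t * ent Y t (c + j))).
rewrite (@big_cat_nat _ _ _ c' 0 n) //=; last by apply: leq_trans Hk; apply: leq_addr.
rewrite (@big_cat_nat _ _ _ (c' + k) c' n) ?leq_addr //=.
rewrite [X in X + _]big1_seq; last first.
  move=> t /andP[_]; rewrite mem_index_iota => /andP[_ Ht]; apply: H0 => //; last by rewrite Ht.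
  lia.
rewrite add0r [X in _ + X]big1_seq; last first.
  by move=> t /andP[_]; rewrite mem_index_iota => /andP[Ht Htn]; apply: H0 => //; rewrite Ht orbT.
rewrite addr0 -{1}[c']add0n big_addn addKn big_mkord.
apply: eq_bigr => s _; by rewrite !mxE [(s + _)%N]addnC.
Qed.


Lemma neqF (a b : nat) : a <> b -> (a == b) = false.
Proof. by move/eqP/negbTE. Qed.

Lemma det_lower k (f : nat -> nat -> C) :
  (forall i j, (i < j)%N -> (j < k)%N -> f i j = 0) ->
  \det (\matrix_(i < k, j < k) f i j) = \prod_(i < k) f i i.
Proof.
move=> H; rewrite det_trig; first by apply: eq_bigr => i _; rewrite mxE.
by apply/is_trig_mxP => i j lij; rewrite mxE H.
Qed.

Lemma det_upper k (f : nat -> nat -> C) :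
  (forall i j, (j < i)%N -> (i < k)%N -> f i j = 0) ->
  \det (\matrix_(i < k, j < k) f i j) = \prod_(i < k) f i i.
Proof.
move=> H; rewrite -det_tr.
have -> : (\matrix_(i < k, j < k) f i j)^T = \matrix_(i < k, j < k) f j i.
  by apply/matrixP => i j; rewrite !mxE.
by rewrite (@det_lower k (fun i j => f j i)) // => i j lij ljk; apply: H.
Qed.

Lemma det_first_row k (f : nat -> nat -> C) :
  (forall j, (j < k.+1)%N -> f 0%N j = (j == 0%N)%:R) ->
  \det (\matrix_(i < k.+1, j < k.+1) f i j) =
  \det (\matrix_(i < k, j < k) f i.+1 j.+1).
Proof.
move=> H; rewrite (expand_det_row _ ord0) big_ord_recl.
rewrite big1 ?addr0; last first.
  by move=> i _; rewrite mxE H // mul0r.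
rewrite mxE H // eqxx mul1r /cofactor /= expr0 mul1r.
by congr (\det _); apply/matrixP => i j; rewrite !mxE !lift0.
Qed.

Lemma ent1 r s : (r < n)%N -> (s < n)%N -> ent (1%:M : 'M[C]_n) r s = (r == s)%:R.
Proof.
move=> Hr Hs.
by rewrite (entE _ (Ordinal Hr) (Ordinal Hs)) mxE.
Qed.

Lemma sum_delta_l (f : nat -> C) r : (r < n)%N ->
  \sum_(t < n) (r == t)%:R * f t = f r.
Proof.
move=> Hr; rewrite (bigD1 (Ordinal Hr)) //= eqxx mul1r big1 ?addr0 //.
move=> t Ht; rewrite (_ : (r == t :> nat) = false) ?mul0r //; apply/negbTE; by rewrite eq_sym -val_eqE in Ht.
Qed.

Lemma sum_delta_r (f : nat -> C) s : (s < n)%N ->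
  \sum_(t < n) f t * (t == s :> nat)%:R = f s.
Proof.
move=> Hs; rewrite (bigD1 (Ordinal Hs)) //= eqxx mulr1 big1 ?addr0 //.
move=> t Ht; rewrite (_ : (t == s :> nat) = false) ?mulr0 //; apply/negbTE; by rewrite -val_eqE in Ht.
Qed.

Definition bord b (A : 'M[C]_n) := forall r s, (r < b)%N || (s < b)%N ->
  (r < n)%N -> (s < n)%N -> ent A r s = (r == s)%:R.

Lemma bord_mul b X Y : bord b X -> bord b Y -> bord b (X *m Y).
Proof.
move=> HX HY r s H Hr Hs; rewrite entM.
case/orP: H => H.
  rewrite -(HY r s) ?H // -(sum_delta_l (fun t => ent Y t s) r Hr).
  by apply: eq_bigr => t _; rewrite HX ?H.
rewrite -(HX r s) ?H ?orbT // -(sum_delta_r (fun t => ent X r t) s Hs).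
by apply: eq_bigr => t _; rewrite HY ?H ?orbT.
Qed.

Lemma bord1 b : bord b 1%:M.
Proof. by move=> r s _ Hr Hs; rewrite ent1. Qed.


Lemma entX j (a : C) r s : (r < n)%N -> (s < n)%N ->
  ent (xmx n j a) r s = (r == s)%:R + a * ((r.+1 == j) && (s.+1 == j.+1))%:R.
Proof.
move=> Hr Hs; rewrite (entE _ (Ordinal Hr) (Ordinal Hs)) /xmx /Emx !mxE /=.
by rewrite mulr_natr.
Qed.

Lemma X_off j (a : C) r s : r != s -> ~~ ((r.+1 == j) && (s == j)) -> ent (xmx n j a) r s = 0.
Proof.
move=> H1 H2; case: (ltnP r n) => Hr; last by rewrite ent_outr.
case: (ltnP s n) => Hs; last by rewrite ent_outc.
by rewrite entX // (negbTE H1) eqSS (negbTE H2) mulr0 addr0.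
Qed.

Lemma X_diag j (a : C) r : (r < n)%N -> ent (xmx n j a) r r = 1.
Proof.
move=> Hr; rewrite entX // eqxx eqSS.
case: (r.+1 =P j) => [<-|] /=; last by rewrite mulr0 addr0.
by rewrite (ltn_eqF (ltnSn r)) mulr0 addr0.
Qed.

Lemma M_xl j (a : C) (A : 'M[C]_n) r : (r <= n)%N ->
  M (xmx n j a *m A) r 0 (n - r) = M A r 0 (n - r).
Proof.
move=> Hr; rewrite (@M_mul _ _ _ _ r); first last.
- move=> i jj t Hi Hj Ht /orP[Htb|Htb]; last by lia.
  rewrite X_off ?mul0r //; first by apply/eqP; lia.
  by apply/negP => /andP[/eqP E1 /eqP E2]; lia.
- lia.
rewrite [M (xmx n j a) _ _ _]/M (@det_upper _ (fun i k => ent (xmx n j a) (r + i)%N (r + k)%N)).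
  rewrite big1 ?mul1r // => i _; have := ltn_ord i; move=> Hi.
  by rewrite X_diag //; lia.
move=> i k Hik Hi; rewrite X_off //; first by apply/eqP; lia.
by apply/negP => /andP[/eqP E1 /eqP E2]; lia.
Qed.

Lemma M_xr j (a : C) (A : 'M[C]_n) r : (r <= n)%N ->
  M (A *m xmx n j a) r 0 (n - r) = M A r 0 (n - r).
Proof.
move=> Hr; rewrite (@M_mul _ _ _ _ 0); first last.
- move=> i jj t Hi Hj Ht /orP[Htb|Htb]; first by lia.
  rewrite X_off ?mulr0 //; first by apply/eqP; lia.
  by apply/negP => /andP[/eqP E1 /eqP E2]; lia.
- lia.
rewrite [M (xmx n j a) _ _ _]/M (@det_upper _ (fun i k => ent (xmx n j a) (0 + i)%N (0 + k)%N)).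
  rewrite big1 ?mulr1 // => i _; have := ltn_ord i; move=> Hi.
  by rewrite X_diag //; lia.
move=> i k Hik Hi; rewrite X_off //; first by apply/eqP; lia.
by apply/negP => /andP[/eqP E1 /eqP E2]; lia.
Qed.

Lemma minorI_M (A : 'M[C]_n) i : minorI A i.+1 n = M A i 0 (n - i).
Proof.
by rewrite /minorI /M subSS.

Qed.

Section Q.
Variable m : nat.
Variable z : nat -> nat -> C.
Hypothesis Hz : forall i k : nat, (1 <= i <= m)%N -> (i <= k <= n)%N -> z i k != 0.

Definition Wb (b : nat) : 'M[C]_n := Wmx n b.+1 (Wargs z b.+1).

Fixpoint Q b len : 'M[C]_n :=
  match len with 0 => 1%:M | l.+1 => Wb (b + l) *m Q b l end.

Lemma Phi_Q k : Phi_aux n z k = Q 0 k.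
Proof. by elim: k => //= k ->; rewrite add0n. Qed.

Lemma Q_S b len : Q b len.+1 = Q b.+1 len *m Wb b.
Proof.
elim: len => [|len IH]; first by rewrite /= addn0 mulmx1 mul1mx.
transitivity (Wb (b + len.+1) *m Q b len.+1); first by [].
by rewrite IH mulmxA /= addSnnS.
Qed.

Lemma entW b r s : (r < n)%N -> (s < n)%N ->
  ent (Wb b) r s = if r == s then (if (r < b)%N then 1 else Wargs z b.+1 r.+1)
                   else if (r == s.+1) && (b <= s)%N then 1 else 0.
Proof.
move=> Hr Hs; rewrite (entE _ (Ordinal Hr) (Ordinal Hs)) mxE /=.
by rewrite !ltnS.
Qed.

Lemma W_off b r s : r != s -> r != s.+1 -> ent (Wb b) r s = 0.
Proof.
move=> H1 H2; case: (ltnP r n) => Hr; last by rewrite ent_outr.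
case: (ltnP s n) => Hs; last by rewrite ent_outc.
by rewrite entW // (negbTE H1) (negbTE H2).
Qed.

Lemma W_sub b s : (s.+1 < n)%N -> (b <= s)%N -> ent (Wb b) s.+1 s = 1.
Proof.
move=> Hs Hb; rewrite entW // ?(ltn_trans _ Hs) //.
by rewrite (gtn_eqF (ltnSn s)) eqxx Hb.
Qed.

Lemma W_diag b r : (r < n)%N -> (b <= r)%N -> ent (Wb b) r r = Wargs z b.+1 r.+1.
Proof. by move=> Hr Hb; rewrite entW // eqxx ltnNge Hb. Qed.

Lemma bord_W b' b : (b' <= b)%N -> bord b' (Wb b).
Proof.
move=> Hb r s H Hr Hs; rewrite entW //.
case: (r =P s) => [E|Hne].
  by rewrite ifT //; case/orP: H; lia.
rewrite ifF; last by apply: negbTE; apply/negP => /andP[/eqP E H2]; case/orP: H; lia.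
by [].
Qed.

Lemma bord_Q b len : bord b (Q b len).
Proof.
elim: len => [|len IH] /=; first exact: bord1.
by apply: bord_mul => //; apply: bord_W; rewrite leq_addr.
Qed.


Lemma tele b k : (b.+1 <= m)%N -> (b.+1 + k <= n)%N ->
  \prod_(i < k.+1) Wargs z b.+1 (b + i).+1 = z b.+1 (b.+1 + k).
Proof.
move=> Hbm; elim: k => [|k IH] Hk.
  by rewrite big_ord1 /Wargs /= !addn0 eqxx.
rewrite big_ord_recr /= IH; last by lia.
rewrite /Wargs (_ : ((b + k.+1).+1 == b.+1) = false); last by apply/negbTE; lia.
rewrite (_ : (b + k.+1).+1.-1 = b.+1 + k)%N; last by lia.
rewrite (_ : (b + k.+1).+1 = b.+1 + k.+1)%N; last by lia.
rewrite mulrC divfK //; apply: Hz; lia.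
Qed.

Lemma M_Q len b r : (b + len <= minn m n)%N -> (b <= r <= b + len)%N ->
  M (Q b len) r b (n - r) = \prod_(r <= l < b + len) z l.+1 n.
Proof.
elim: len b r => [|len IH] b r Hb Hr.
  have -> : r = b by lia.
  rewrite addn0 big_geq // /M (_ : \matrix_(i < n - b, j < n - b) ent (Q b 0) (b + i) (b + j) = 1%:M) ?det1 //.
  apply/matrixP => i j; have := ltn_ord i; have := ltn_ord j; move=> Hi Hj.
  rewrite !mxE /= ent1; try lia.
  by rewrite eqn_add2l.
have Hmn : (b + len.+1 <= n)%N by move: Hb; rewrite leq_min => /andP[_].
have Hmm : (b + len.+1 <= m)%N by move: Hb; rewrite leq_min => /andP[].
rewrite Q_S.
case: (ltnP b r) => Hbr.
  rewrite (@M_mul _ _ _ _ b.+1); first last.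
  - move=> i j t Hi Hj Ht /orP[Htb|Htb].
      rewrite (@bord_Q b.+1 len) ?Htb ?orbT; try lia.
      by rewrite neqF ?mul0r //; lia.
    by rewrite W_off ?mulr0 //; apply/eqP; lia.
  - lia.
  rewrite (_ : M (Wb b) b.+1 b (n - r) = 1) ?mulr1; last first.
    rewrite /M (@det_upper _ (fun i j => ent (Wb b) (b.+1 + i)%N (b + j)%N)); last by move=> i j Hij Hi; rewrite W_off //; apply/eqP; lia.
    by rewrite big1 // => i _; have := ltn_ord i; move=> Hi; rewrite addSn W_sub //; lia.
  by rewrite IH; [rewrite addSnnS | rewrite addSnnS | lia].
have Er : r = b by lia.
subst r.
rewrite (@M_mul _ _ _ _ b); first last.
- move=> i j t Hi Hj Ht /orP[Htb|Htb]; last by lia.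
  rewrite (@bord_Q b.+1 len) ?(ltnW Htb) ?orbT; try lia.
  by rewrite neqF ?mul0r //; lia.
- lia.
rewrite (_ : M (Wb b) b b (n - b) = z b.+1 n); last first.
  rewrite /M (@det_lower _ (fun i j => ent (Wb b) (b + i)%N (b + j)%N)); last by move=> i j Hij Hj; rewrite W_off //; apply/eqP; lia.
  have -> : (n - b = (n - b.+1).+1)%N by lia.
  rewrite (eq_bigr (fun i : 'I_(n - b.+1).+1 => Wargs z b.+1 (b + i)%N.+1)); last first.
    by move=> i _; have := ltn_ord i; move=> Hi; rewrite W_diag //; lia.
  rewrite (@tele b (n - b.+1)); [congr (z _ _); lia | lia | lia].
rewrite (_ : M (Q b.+1 len) b b (n - b) = M (Q b.+1 len) b.+1 b.+1 (n - b.+1)); last first.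
  have -> : (n - b = (n - b.+1).+1)%N by lia.
  rewrite /M (@det_first_row _ (fun i j => ent (Q b.+1 len) (b + i)%N (b + j)%N)); last first.
    move=> j Hj; rewrite addn0 (@bord_Q b.+1 len b (b + j)%N); first last.
    - lia.
    - lia.
    - by rewrite ltnSn.
    by case: j Hj => [|j] Hj; rewrite ?addn0 ?eqxx // neqF //; lia.
  by congr (\det _); apply/matrixP => i j; rewrite !mxE !addnS.
rewrite IH; try lia.
rewrite (@big_ltn _ _ _ b); last by lia.
by rewrite mulrC addSnnS.
Qed.
End Q.
End Aux.

Theorem lemma3p6 (C : numClosedFieldType) (m n j : nat) :
  (1 <= j <= n.-1)%N ->
  forall (z : nat -> nat -> C) (c : C),
    (forall i k : nat, (1 <= i <= m)%N -> (i <= k <= n)%N -> z i k != 0) ->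
    c != 0 ->
    ent (Phi m n z) j j.-1 != 0 ->
    (forall i : nat, (1 <= i <= minn m n)%N ->
       minorI (ebar_mx m n j c z) i.+1 n != 0) ->
    sh m n (ebar m n j c z) = sh m n z.
Proof.
move=> _ z c Hz _ _ _.
rewrite /sh; apply/eq_in_map => i; rewrite mem_iota => /andP[Hi1 Hi2].
have [i' Ei] : exists i', i = i'.+1 by exists i.-1; lia.
subst i.
have Hp : (i' < minn m n)%N by lia.
have Hpn : (minn m n <= n)%N by apply: geq_minr.
rewrite /ebar /Psi !minorI_M /ebar_mx.
rewrite !M_xr ?M_xl; try lia.
rewrite /Phi !Phi_Q !(@M_Q _ _ m) //; try lia.
rewrite (@big_ltn _ _ _ i'); last by lia.
rewrite mulfK //.
rewrite prodf_seq_neq0; apply/allP => l; rewrite mem_index_iota => /andP[Hl1 Hl2].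
apply/implyP => _; apply: Hz; lia.
Qed.
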